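(* For every class of closed formulas $\mathbb{P}$ and every $n$, every safety problem provable in $\mathbf{FBI}^{\mathbb{P}}_n$ is also provable in $\mathbf{F}^{\mathbb{P}_n}$, where $\mathbb{P}_n$ consists of all Boolean combinations of at most $n$ predicates from $\mathbb{P}$. Moreover, for every $n>0$ there exist a class of predicates $\mathbb{P}$ and a safety problem $\Pi$ such that $\Pi$ is provable in $\mathbf{FBI}^{\mathbb{P}}_n$ but is provable in none of $\mathbf{FBI}^{\mathbb{P}}_{n-1}$, $\mathbf{FI}^{\mathbb{P}}$, $\mathbf{F}^{\mathbb{P}}$.
   Context: A first-order vocabulary $\Sigma$ consists of constant, function and relation symbols; $\Sigma'=\{a' : a\in\Sigma\}$ is a disjoint copy, and for a formula $\varphi$ over $\Sigma$, $\varphi'$ denotes $\varphi$ with every symbol replaced by its primed copy. A safety problem is a triple $(\iota,\tau,\beta)$, where $\iota,\beta$ are closed formulas over $\Sigma$ and $\tau$ is a closed formula over $\Sigma\uplus\Sigma'$. $A\Rightarrow B$ means the implication $A\to B$ is valid. $\tau^{-1}$ denotes $\tau$ with each symbol of $\Sigma$ and its primed counterpart swapped. Proofs: a proof of $\Pi$ in a system is a finite tree whose nodes are safety problems, whose root is $\Pi$, and in which each node together with its children is an instance of one of the system's rules, with side conditions valid. Rules ($\varphi$ ranges over closed formulas over $\Sigma$): (Ind): no premises; conclusion $(\iota,\tau,\neg\varphi)$; side conditions $\iota\Rightarrow\varphi$ and $\varphi\wedge\tau\Rightarrow\varphi'$. (Cons): premise $(\iota,\tau,\neg\varphi)$; conclusion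 $(\iota,\tau,\beta)$; side condition $\varphi\Rightarrow\neg\beta$. (Inc): premises $(\iota,\tau,\neg\varphi)$ and $(\iota\wedge\varphi,\ \tau\wedge\varphi\wedge\varphi',\ \beta\wedge\varphi)$; conclusion $(\iota,\tau,\beta)$. (Rev): premise $(\beta,\tau^{-1},\iota)$; conclusion $(\iota,\tau,\beta)$. $\mathbf{F}=\{$Ind, Cons$\}$, $\mathbf{FI}=\mathbf{F}\cup\{$Inc$\}$, $\mathbf{FBI}=\mathbf{FI}\cup\{$Rev$\}$. For a class of closed formulas $\mathbb{P}$, $X^{\mathbb{P}}$ denotes system $X$ with applications of (Ind) restricted to $\varphi\in\mathbb{P}$, and $X^{\mathbb{P}}_n$ further restricts proofs to at most $n$ applications of (Ind). *)

(* Defs.v *)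
From Stdlib Require Import List Arith.
Import ListNotations.

Record sig : Type := Sig {
  fsym : Type;
  rsym : Type;
  far : fsym -> nat;
  rar : rsym -> nat
}.

(* Sigma (+) Sigma' : inl = unprimed symbol, inr = primed copy. *)
Definition sig2 (S : sig) : sig :=
  {| fsym := fsym S + fsym S;
     rsym := rsym S + rsym S;
     far := fun f => match f with inl g | inr g => far S g end;
     rar := fun r => match r with inl g | inr g => rar S g end |}.

Inductive term (S : sig) : Type :=
| Var : nat -> term S
| App : fsym S -> list (term S) -> term S.
Arguments Var {S}. Arguments App {S}.

Inductive formula (S : sig) : Type :=
| FTrue : formula S
| FFalse : formula S
| FRel : rsym S -> list (term S) -> formula S
| FEq : term S -> term S -> formula S
| FNot : formula S -> formula S
| FAnd : formula S -> formula S -> formula S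
| FOr : formula S -> formula S -> formula S
| FImp : formula S -> formula S -> formula S
| FAll : nat -> formula S -> formula S
| FEx : nat -> formula S -> formula S.
Arguments FTrue {S}. Arguments FFalse {S}. Arguments FRel {S}.
Arguments FEq {S}. Arguments FNot {S}. Arguments FAnd {S}.
Arguments FOr {S}. Arguments FImp {S}. Arguments FAll {S}. Arguments FEx {S}.

Fixpoint wf_term {S : sig} (t : term S) : Prop :=
  match t with
  | Var _ => True
  | App f args =>
      length args = far S f /\
      (fix wl (l : list (term S)) : Prop :=
         match l with [] => True | u :: l' => wf_term u /\ wl l' end) args
  end.

Fixpoint wf {S : sig} (p : formula S) : Prop :=
  match p with
  | FTrue | FFalse => True
  | FRel r args => length args = rar S r /\ Forall wf_term args
  | FEq t u => wf_term t /\ wf_term u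
  | FNot a => wf a
  | FAnd a b | FOr a b | FImp a b => wf a /\ wf b
  | FAll _ a | FEx _ a => wf a
  end.

Fixpoint fv_term {S : sig} (t : term S) : list nat :=
  match t with
  | Var x => [x]
  | App _ args =>
      (fix fl (l : list (term S)) : list nat :=
         match l with [] => [] | u :: l' => fv_term u ++ fl l' end) args
  end.

Fixpoint fv {S : sig} (p : formula S) : list nat :=
  match p with
  | FTrue | FFalse => []
  | FRel _ args => flat_map fv_term args
  | FEq t u => fv_term t ++ fv_term u
  | FNot a => fv a
  | FAnd a b | FOr a b | FImp a b => fv a ++ fv b
  | FAll x a | FEx x a => filter (fun y => negb (Nat.eqb y x)) (fv a)
  end.

Definition closed {S : sig} (p : formula S) : Prop := wf p /\ fv p = [].

(* Structures (nonempty domain). Function/relation symbols are interpreted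
   on argument lists; on well-formed formulas only lists of the correct
   length are ever used. *)
Record structure (S : sig) : Type := Struct {
  dom : Type;
  dom_inh : dom;
  ifun : fsym S -> list dom -> dom;
  irel : rsym S -> list dom -> Prop
}.
Arguments dom {S}. Arguments ifun {S}. Arguments irel {S}.

Definition upd {D : Type} (e : nat -> D) (x : nat) (d : D) : nat -> D :=
  fun y => if Nat.eqb y x then d else e y.

Fixpoint eval {S : sig} (M : structure S) (e : nat -> dom M) (t : term S)
  : dom M :=
  match t with
  | Var x => e x
  | App f args => ifun M f (map (eval M e) args)
  end.

Fixpoint sat {S : sig} (M : structure S) (e : nat -> dom M) (p : formula S)
  : Prop :=
  match p with
  | FTrue => True
  | FFalse => False
  | FRel r args => irel M r (map (eval M e) args)
  | FEq t u => eval M e t = eval M e u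
  | FNot a => ~ sat M e a
  | FAnd a b => sat M e a /\ sat M e b
  | FOr a b => sat M e a \/ sat M e b
  | FImp a b => sat M e a -> sat M e b
  | FAll x a => forall d : dom M, sat M (upd e x d) a
  | FEx x a => exists d : dom M, sat M (upd e x d) a
  end.

Definition valid {S : sig} (p : formula S) : Prop :=
  forall (M : structure S) (e : nat -> dom M), sat M e p.

Definition entails {S : sig} (a b : formula S) : Prop := valid (FImp a b).

Fixpoint rn_term {S1 S2 : sig} (g : fsym S1 -> fsym S2) (t : term S1)
  : term S2 :=
  match t with
  | Var x => Var x
  | App f args => App (g f) (map (rn_term g) args)
  end.

Fixpoint rn {S1 S2 : sig} (g : fsym S1 -> fsym S2) (h : rsym S1 -> rsym S2)
  (p : formula S1) : formula S2 :=
  match p with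
  | FTrue => FTrue
  | FFalse => FFalse
  | FRel r args => FRel (h r) (map (rn_term g) args)
  | FEq t u => FEq (rn_term g t) (rn_term g u)
  | FNot a => FNot (rn g h a)
  | FAnd a b => FAnd (rn g h a) (rn g h b)
  | FOr a b => FOr (rn g h a) (rn g h b)
  | FImp a b => FImp (rn g h a) (rn g h b)
  | FAll x a => FAll x (rn g h a)
  | FEx x a => FEx x (rn g h a)
  end.

Definition unprimed {S : sig} (p : formula S) : formula (sig2 S) :=
  @rn S (sig2 S) inl inl p.
Definition primed {S : sig} (p : formula S) : formula (sig2 S) :=
  @rn S (sig2 S) inr inr p.

Definition swap {A : Type} (x : A + A) : A + A :=
  match x with inl a => inr a | inr a => inl a end.
Definition inv {S : sig} (t : formula (sig2 S)) : formula (sig2 S) :=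
  @rn (sig2 S) (sig2 S) swap swap t.

Definition safety {S : sig} (i : formula S) (t : formula (sig2 S))
  (b : formula S) : Prop := closed i /\ closed t /\ closed b.

Inductive system := SysF | SysFI | SysFBI.
Definition has_inc (X : system) : bool :=
  match X with SysF => false | _ => true end.
Definition has_rev (X : system) : bool :=
  match X with SysFBI => true | _ => false end.

(* deriv X P k i t b : there is a proof tree in system X (with (Ind)
   restricted to P) with root (i,t,b) and exactly k applications of (Ind). *)
Inductive deriv {S : sig} (X : system) (P : formula S -> Prop)
  : nat -> formula S -> formula (sig2 S) -> formula S -> Prop :=
| d_ind : forall i t phi,
    P phi -> closed phi ->
    entails i phi ->
    entails (FAnd (unprimed phi) t) (primed phi) ->
    deriv X P 1 i t (FNot phi)
| d_cons : forall k i t b phi,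
    closed phi ->
    deriv X P k i t (FNot phi) ->
    entails phi (FNot b) ->
    deriv X P k i t b
| d_inc : forall k1 k2 i t b phi,
    has_inc X = true ->
    closed phi ->
    deriv X P k1 i t (FNot phi) ->
    deriv X P k2 (FAnd i phi)
          (FAnd t (FAnd (unprimed phi) (primed phi))) (FAnd b phi) ->
    deriv X P (k1 + k2) i t b
| d_rev : forall k i t b,
    has_rev X = true ->
    deriv X P k b (inv t) i ->
    deriv X P k i t b.

Definition provable {S : sig} (X : system) (P : formula S -> Prop)
  (i : formula S) (t : formula (sig2 S)) (b : formula S) : Prop :=
  safety i t b /\ exists k, deriv X P k i t b.

Definition provable_n {S : sig} (X : system) (P : formula S -> Prop) (n : nat)
  (i : formula S) (t : formula (sig2 S)) (b : formula S) : Prop :=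
  safety i t b /\ exists k, k <= n /\ deriv X P k i t b.

Inductive bool_comb {S : sig} (l : list (formula S)) : formula S -> Prop :=
| bc_atom : forall p, In p l -> bool_comb l p
| bc_true : bool_comb l FTrue
| bc_false : bool_comb l FFalse
| bc_not : forall a, bool_comb l a -> bool_comb l (FNot a)
| bc_and : forall a b, bool_comb l a -> bool_comb l b -> bool_comb l (FAnd a b)
| bc_or : forall a b, bool_comb l a -> bool_comb l b -> bool_comb l (FOr a b)
| bc_imp : forall a b, bool_comb l a -> bool_comb l b -> bool_comb l (FImp a b).

Definition Pn {S : sig} (P : formula S -> Prop) (n : nat) : formula S -> Prop :=
  fun p => exists l : list (formula S),
    length l <= n /\ Forall P l /\ bool_comb l p.

(* Main.v *)
Require Import Defs.
From Stdlib Require Import List Arith Lia Classical FunctionalExtensionality FinFun.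
Import ListNotations.

Definition pull {S1 S2 : sig} (g : fsym S1 -> fsym S2) (h : rsym S1 -> rsym S2)
  (M : structure S2) : structure S1 :=
  @Struct S1 (dom M) (dom_inh _ M) (fun f => ifun M (g f)) (fun r => irel M (h r)).

Fixpoint eval_rn {S1 S2 : sig} (g : fsym S1 -> fsym S2) (h : rsym S1 -> rsym S2)
  (M : structure S2) (e : nat -> dom M) (t : term S1) {struct t} :
  eval M e (rn_term g t) = eval (pull g h M) e t :=
  match t as t0 return eval M e (rn_term g t0) = eval (pull g h M) e t0 with
  | Var x => eq_refl
  | App f args => f_equal (ifun M (g f))
     ((fix aux (l : list (term S1)) :
         map (eval M e) (map (rn_term g) l) = map (eval (pull g h M) e) l :=
        match l as l0 return
          map (eval M e) (map (rn_term g) l0) = map (eval (pull g h M) e) l0 with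
        | [] => eq_refl
        | u :: l' => f_equal2 cons (eval_rn g h M e u) (aux l') end) args)
  end.

Lemma map_eval_rn {S1 S2 : sig} (g : fsym S1 -> fsym S2) (h : rsym S1 -> rsym S2)
  (M : structure S2) (e : nat -> dom M) (l : list (term S1)) :
  map (eval M e) (map (rn_term g) l) = map (eval (pull g h M) e) l.
Proof. induction l as [|u l IH]; simpl; [reflexivity|]. rewrite IH, (eval_rn g h). reflexivity. Qed.

Lemma sat_rn {S1 S2 : sig} (g : fsym S1 -> fsym S2) (h : rsym S1 -> rsym S2)
  (M : structure S2) (p : formula S1) : forall (e : nat -> dom M),
  sat M e (rn g h p) <-> sat (pull g h M) e p.
Proof.
  induction p; intro e; simpl; try tauto.
  - rewrite (map_eval_rn g h). tauto.
  - rewrite (eval_rn g h), (eval_rn g h). tauto.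
  - rewrite IHp. tauto.
  - rewrite IHp1, IHp2. tauto.
  - rewrite IHp1, IHp2. tauto.
  - rewrite IHp1, IHp2. tauto.
  - split; intros H d; apply IHp; apply H.
  - split; intros [d H]; exists d; apply IHp; exact H.
Qed.

Lemma ent_unp {S : sig} (a b : formula S) (M : structure (sig2 S)) e :
  entails a b -> sat M e (unprimed a) -> sat M e (unprimed b).
Proof. intros H Ha. apply sat_rn. apply (H (@pull S (sig2 S) inl inl M) e). apply sat_rn. exact Ha. Qed.

Lemma ent_pri {S : sig} (a b : formula S) (M : structure (sig2 S)) e :
  entails a b -> sat M e (primed a) -> sat M e (primed b).
Proof. intros H Ha. apply sat_rn. apply (H (@pull S (sig2 S) inr inr M) e). apply sat_rn. exact Ha. Qed.

Inductive cb {S : sig} (neg : bool) (L : list (formula S)) : formula S -> Prop :=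
| cb_at : forall p, In p L -> cb neg L p
| cb_and : forall a b, cb neg L a -> cb neg L b -> cb neg L (FAnd a b)
| cb_not : forall a, neg = true -> cb neg L a -> cb neg L (FNot a).

Lemma cb_mono {S : sig} neg (L L' : list (formula S)) p :
  incl L L' -> cb neg L p -> cb neg L' p.
Proof. intros Hi H; induction H; [apply cb_at; auto|apply cb_and; auto|apply cb_not; auto]. Qed.

Lemma cb_bc {S : sig} neg (L : list (formula S)) p : cb neg L p -> bool_comb L p.
Proof. intro H; induction H; [apply bc_atom|apply bc_and|apply bc_not]; auto. Qed.

Lemma closed_and {S : sig} (a b : formula S) : closed a -> closed b -> closed (FAnd a b).
Proof. intros [Wa Fa] [Wb Fb]; split; simpl; [tauto| rewrite Fa, Fb; reflexivity]. Qed.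

Lemma closed_not {S : sig} (a : formula S) : closed a -> closed (FNot a).
Proof. intros [Wa Fa]; split; simpl; auto. Qed.

Lemma main {S : sig} X (P : formula S -> Prop) k i t b :
  deriv X P k i t b ->
  exists L th, length L = k /\ Forall P L /\ cb (has_rev X) L th /\ closed th /\
    entails i th /\ entails (FAnd (unprimed th) t) (primed th) /\ entails th (FNot b).
Proof.
  induction 1.
  - exists [phi], phi. refine (conj _ (conj _ (conj _ (conj _ (conj _ (conj _ _)))))).
    + reflexivity.
    + auto.
    + apply cb_at; simpl; auto.
    + exact H0.
    + exact H1.
    + exact H2.
    + intros M e H3 H4. exact (H4 H3).
  - destruct IHderiv as (L & th & HL & HP & Hc & Hcl & Hi & Ht & Hb).
    exists L, th. refine (conj _ (conj _ (conj _ (conj _ (conj _ (conj _ _)))))); try assumption.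
    intros M e H3 H4. apply (Hb M e H3). intro Hp. exact (H1 M e Hp H4).
  - destruct IHderiv1 as (L1 & th1 & HL1 & HP1 & Hc1 & Hcl1 & Hi1 & Ht1 & Hb1).
    destruct IHderiv2 as (L2 & th2 & HL2 & HP2 & Hc2 & Hcl2 & Hi2 & Ht2 & Hb2).
    assert (Hphi : entails th1 phi).
    { intros M e H3. apply NNPP. exact (Hb1 M e H3). }
    exists (L1 ++ L2), (FAnd th1 th2). refine (conj _ (conj _ (conj _ (conj _ (conj _ (conj _ _)))))).
    + rewrite length_app; auto.
    + apply Forall_app; auto.
    + apply cb_and; eapply cb_mono; eauto; intros x Hx; apply in_or_app; auto.
    + apply closed_and; auto.
    + intros M e Hi. pose proof (Hi1 M e Hi) as A1. split; auto.
      apply (Hi2 M e). split; auto. exact (Hphi M e A1).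
    + intros M e [[A1 A2] Ht]. pose proof (Ht1 M e (conj A1 Ht)) as B1.
      split; [exact B1|]. apply (Ht2 M e). repeat split; auto.
      * exact (ent_unp _ _ M e Hphi A1).
      * exact (ent_pri _ _ M e Hphi B1).
    + intros M e [A1 A2] Hb. apply (Hb2 M e A2). split; auto. exact (Hphi M e A1).
  - destruct IHderiv as (L & th & HL & HP & Hc & Hcl & Hi & Ht & Hb).
    exists L, (FNot th). refine (conj _ (conj _ (conj _ (conj _ (conj _ (conj _ _)))))).
    + assumption.
    + assumption.
    + apply cb_not; auto.
    + apply closed_not; auto.
    + intros M e H1 H2. exact (Hb M e H2 H1).
    + intros M e [H1 H2] H3.
      destruct M as [D d f r].
      assert (X1 : sat (@pull (sig2 S) (sig2 S) swap swap (Struct _ D d f r)) e (unprimed th)).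
      { apply sat_rn. apply sat_rn in H3. exact H3. }
      assert (X2 : sat (@pull (sig2 S) (sig2 S) swap swap (Struct _ D d f r)) e (inv t)).
      { apply sat_rn. unfold pull; simpl.
        assert (E1 : (fun x => f (swap (swap x))) = f).
        { apply functional_extensionality; intros [x|x]; reflexivity. }
        assert (E2 : (fun x => r (swap (swap x))) = r).
        { apply functional_extensionality; intros [x|x]; reflexivity. }
        rewrite E1, E2. exact H2. }
      pose proof (Ht (@pull (sig2 S) (sig2 S) swap swap (Struct _ D d f r)) e (conj X1 X2)) as X3.
      pose proof (proj1 (@sat_rn S (sig2 S) inr inr (@pull (sig2 S) (sig2 S) swap swap (Struct _ D d f r)) th e) X3) as Y.
      exact (H1 (proj2 (@sat_rn S (sig2 S) inl inl (Struct _ D d f r) th e) Y)).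
    + intros M e H1 H2. exact (H1 (Hi M e H2)).
Qed.

Lemma part1 : forall (S : sig) (P : formula S -> Prop) (n : nat)
          (i : formula S) (t : formula (sig2 S)) (b : formula S),
     (forall phi, P phi -> closed phi) ->
     provable_n SysFBI P n i t b ->
     provable SysF (Pn P n) i t b.
Proof.
  intros S P n i t b _ [Hs [k [Hk D]]].
  destruct (main _ _ _ _ _ _ D) as (L & th & HL & HP & Hc & Hcl & Hi & Ht & Hb).
  split; [exact Hs|]. exists 1.
  apply d_cons with (phi := th); auto.
  apply d_ind; auto.
  exists L. split; [lia|]. split; auto. eapply cb_bc; eauto.
Qed.

Definition S0 : sig := Sig Empty_set nat (fun _ => 0) (fun _ => 0).
Definition P0 : formula S0 -> Prop := fun p => exists k, p = @FRel S0 k [].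
Definition pv (k : nat) : formula S0 := @FRel S0 k [].
Fixpoint A (m : nat) : formula S0 :=
  match m with 0 => FFalse | S m' => FAnd (pv (S m')) (FNot (A m')) end.

Lemma closed_pv k : closed (pv k).
Proof. split; simpl; auto. Qed.
Lemma closed_A m : closed (A m).
Proof. induction m; simpl. split; simpl; auto. apply closed_and. apply closed_pv. apply closed_not; auto. Qed.

Definition unsat {S : sig} (t : formula (sig2 S)) : Prop :=
  forall (M : structure (sig2 S)) e, ~ sat M e t.

Lemma unsat_inv {S : sig} (t : formula (sig2 S)) : unsat t -> unsat (inv t).
Proof. intros H M e Ht. apply (H (@pull (sig2 S) (sig2 S) swap swap M) e). apply sat_rn. exact Ht. Qed.

Lemma derA : forall m (i : formula S0) t b, unsat t ->
  entails b (A (S m)) -> entails i (FNot (A (S m))) ->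
  deriv SysFBI P0 (S m) i t b.
Proof.
  induction m; intros i t b Ut Hb Hi.
  - apply d_rev; [reflexivity|].
    apply d_cons with (phi := pv 1). apply closed_pv.
    + apply d_ind. exists 1; reflexivity. apply closed_pv.
      intros M e H. exact (proj1 (Hb M e H)).
      intros M e [_ H]. exfalso. exact (unsat_inv t Ut M e H).
    + intros M e H1 H2. apply (Hi M e H2). split; [exact H1|]. simpl; auto.
  - apply d_rev; [reflexivity|].
    change (S (S m)) with (1 + S m).
    apply d_inc with (phi := pv (S (S m))). reflexivity. apply closed_pv.
    + apply d_ind. exists (S (S m)); reflexivity. apply closed_pv.
      intros M e H. exact (proj1 (Hb M e H)).
      intros M e [_ H]. exfalso. exact (unsat_inv t Ut M e H).
    + apply IHm.
      * intros M e [H _]. exact (unsat_inv t Ut M e H).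
      * intros M e [H1 H2]. apply NNPP. intro H3. apply (Hi M e H1). split; auto.
      * intros M e [H1 H2]. exact (proj2 (Hb M e H1)).
Qed.

Definition Mv (v : nat -> bool) : structure S0 :=
  @Struct S0 unit tt (fun _ _ => tt) (fun r _ => v r = true).

Lemma A_false m e : ~ sat (Mv (fun _ => false)) e (A m).
Proof. destruct m; simpl. auto. intros [H _]. discriminate. Qed.

Definition vj (j : nat) (bb : bool) (k : nat) : bool :=
  if k <? j then false else if k =? j then bb else true.

Lemma vj_lt j bb k : k < j -> vj j bb k = false.
Proof. intro H; unfold vj. destruct (Nat.ltb_spec k j); auto; lia. Qed.
Lemma vj_eq j bb : vj j bb j = bb.
Proof. unfold vj. destruct (Nat.ltb_spec j j); try lia. rewrite Nat.eqb_refl; auto. Qed.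
Lemma vj_gt j bb k : j < k -> vj j bb k = true.
Proof. intro H; unfold vj. destruct (Nat.ltb_spec k j); try lia. destruct (Nat.eqb_spec k j); auto; lia. Qed.

Lemma A_lt j bb e : forall m, m < j -> ~ sat (Mv (vj j bb)) e (A m).
Proof.
  destruct m; simpl; auto. intros H [H1 _]. rewrite vj_lt in H1 by lia. discriminate.
Qed.

Lemma A_flip j e : 1 <= j -> forall m, j <= m ->
  (sat (Mv (vj j true)) e (A m) <-> ~ sat (Mv (vj j false)) e (A m)).
Proof.
  intros Hj. induction m; intro Hm; [lia|].
  destruct (Nat.eq_dec (S m) j) as [E|E].
  - subst j. simpl. rewrite !vj_eq.
    pose proof (A_lt (S m) true e m ltac:(lia)). pose proof (A_lt (S m) false e m ltac:(lia)).
    split; intros; [intros [Hf _]; discriminate|]. split; auto.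
  - simpl. rewrite !vj_gt by lia. specialize (IHm ltac:(lia)).
    destruct (classic (sat (Mv (vj j false)) e (A m))); tauto.
Qed.

Lemma cb_agree {S : sig} neg L (th : formula S) (M1 M2 : structure S) e1 e2 :
  cb neg L th -> (forall p, In p L -> (sat M1 e1 p <-> sat M2 e2 p)) ->
  (sat M1 e1 th <-> sat M2 e2 th).
Proof. intros H Hp; induction H; simpl; auto. rewrite IHcb1, IHcb2; tauto. rewrite IHcb; tauto. Qed.

Lemma cb_conj {S : sig} L (th : formula S) (M : structure S) e :
  cb false L th -> (forall p, In p L -> ~ sat M e p) -> ~ sat M e th.
Proof. intros H Hp; induction H; simpl; auto. tauto. discriminate. Qed.

Lemma pigeon n (L : list (formula S0)) : length L < n ->
  exists j, 1 <= j <= n /\ ~ In (pv j) L.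
Proof.
  intro Hl. apply NNPP. intro Hn.
  assert (Hinc : incl (map pv (seq 1 n)) L).
  { intros x Hx. apply in_map_iff in Hx. destruct Hx as [j [<- Hj]].
    apply in_seq in Hj. apply NNPP. intro H. apply Hn. exists j. split; [lia|auto]. }
  assert (ND : NoDup (map pv (seq 1 n))).
  { apply Injective_map_NoDup. intros a b0 H. injection H; auto. apply seq_NoDup. }
  pose proof (NoDup_incl_length ND Hinc). rewrite length_map, length_seq in H. lia.
Qed.

Lemma P0_sat L (v : nat -> bool) (e : nat -> unit) p : Forall P0 L -> In p L -> exists k, p = pv k.
Proof. intros HF Hin. rewrite Forall_forall in HF. destruct (HF p Hin) as [k ->]. exists k; reflexivity. Qed.

Lemma part2 : forall n : nat, 0 < n ->
     exists (S : sig) (P : formula S -> Prop)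
            (i : formula S) (t : formula (sig2 S)) (b : formula S),
       (forall phi, P phi -> closed phi) /\
       provable_n SysFBI P n i t b /\
       ~ provable_n SysFBI P (n - 1) i t b /\
       ~ provable SysFI P i t b /\
       ~ provable SysF P i t b.
Proof.
  intros n Hn.
  assert (Hs : @safety S0 (FNot (A n)) FFalse (A n)).
  { split. apply closed_not, closed_A. split. split; simpl; auto. apply closed_A. }
  assert (Hneg : forall X k, has_rev X = false -> ~ deriv X P0 k (FNot (A n)) FFalse (A n)).
  { intros X k HX D.
    destruct (main _ _ _ _ _ _ D) as (L & th & HL & HP & Hc & Hcl & Hi & Ht & Hb).
    rewrite HX in Hc.
    pose (e := fun _ : nat => tt).
    apply (cb_conj L th (Mv (fun _ => false)) e Hc).
    - intros p Hin. destruct (P0_sat L (fun _ => false) e p HP Hin) as [k0 ->]. simpl. discriminate.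
    - apply (Hi (Mv (fun _ => false)) e). apply A_false. }
  exists S0, P0, (FNot (A n)), FFalse, (A n).
  split; [|split; [|split; [|split]]].
  - intros p [k ->]. apply closed_pv.
  - split; auto. exists n. split; auto. destruct n as [|m]; [lia|].
    apply derA. intros M e H; exact H.
    intros M e H; exact H. intros M e H; exact H.
  - intros [_ [k [Hk D]]].
    destruct (main _ _ _ _ _ _ D) as (L & th & HL & HP & Hc & Hcl & Hi & Ht & Hb).
    destruct (pigeon n L ltac:(lia)) as [j [Hj Hnin]].
    pose (e := fun _ : nat => tt).
    assert (Ag : sat (Mv (vj j true)) e th <-> sat (Mv (vj j false)) e th).
    { apply (cb_agree true L); auto. intros p Hin.
      destruct (P0_sat L (fun _ => false) e p HP Hin) as [k0 ->].
      assert (k0 <> j) by (intro; subst; auto).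
      simpl. unfold vj. destruct (k0 <? j); [tauto|].
      destruct (Nat.eqb_spec k0 j); [lia|tauto]. }
    pose proof (A_flip j e ltac:(lia) n ltac:(lia)) as F.
    destruct (classic (sat (Mv (vj j true)) e (A n))) as [Ht1|Ht1].
    + assert (Hf : ~ sat (Mv (vj j false)) e (A n)) by tauto.
      pose proof (Hi (Mv (vj j false)) e Hf) as T. apply Ag in T. exact (Hb (Mv (vj j true)) e T Ht1).
    + pose proof (Hi (Mv (vj j true)) e Ht1) as T. apply Ag in T.
      apply (Hb (Mv (vj j false)) e T). apply NNPP. tauto.
  - intros [_ [k D]]. exact (Hneg SysFI k eq_refl D).
  - intros [_ [k D]]. exact (Hneg SysF k eq_refl D).
Qed.

Theorem theorem4p14 :
  (forall (S : sig) (P : formula S -> Prop) (n : nat)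
          (i : formula S) (t : formula (sig2 S)) (b : formula S),
     (forall phi, P phi -> closed phi) ->
     provable_n SysFBI P n i t b ->
     provable SysF (Pn P n) i t b)
  /\
  (forall n : nat, 0 < n ->
     exists (S : sig) (P : formula S -> Prop)
            (i : formula S) (t : formula (sig2 S)) (b : formula S),
       (forall phi, P phi -> closed phi) /\
       provable_n SysFBI P n i t b /\
       ~ provable_n SysFBI P (n - 1) i t b /\
       ~ provable SysFI P i t b /\
       ~ provable SysF P i t b).
Proof. split; [exact part1 | exact part2]. Qed.
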